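(* Let $m\ge 2$, and let $C_1,\dots,C_m>0$, $\mu^c_1,\dots,\mu^c_m\ge 0$, $\theta^c_1,\dots,\theta^c_m\ge 0$ and $\lambda^c\ge 0$ be real numbers. Consider the system of ordinary differential equations $$\begin{aligned} x_1'(t)&=\mu^c_1\frac{C_1-x_1}{C_1}-\theta^c_1x_1-\mu^c_2\frac{x_1}{C_1}\frac{C_2-x_2}{C_2},\\ x_i'(t)&=\mu^c_i\frac{x_{i-1}}{C_{i-1}}\frac{C_i-x_i}{C_i}-\theta^c_ix_i-\mu^c_{i+1}\frac{x_i}{C_i}\frac{C_{i+1}-x_{i+1}}{C_{i+1}},\qquad 2\le i\le m-1,\\ x_m'(t)&=\mu^c_m\frac{x_{m-1}}{C_{m-1}}\frac{C_m-x_m}{C_m}-\theta^c_mx_m-\lambda^c, \end{aligned}$$ where $x_i=x_i(t)$. Let $(x_1^*,\dots,x_m^* )$ be an equilibrium point of this system (a point where all right-hand sides vanish) with $0\le x_i^*\le C_i$ for $i=1,\dots,m$. If $$\frac{\mu^c_2}{C_1}<\frac{\mu^c_1}{C_1}+\theta^c_1,\qquad \frac{\mu^c_i}{C_{i-1}}+\frac{\mu^c_{i+1}}{C_{i+1}}<\theta^c_i\ \ (2\le i\le m-1),\qquad \frac{\mu^c_m}{C_{m-1}}<\theta^c_m,$$ then $(x_1^*,\dots,x_m^* )$ is a stable equilibrium point (all eigenvalues of the Jacobian of the system at this point have negative real part).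
   Context: The system models an $m$-echelon inventory system in which the warehouses of each echelon are aggregated into one warehouse: $x_i(t)$ is the inventory level of echelon $i$, $C_i$ its maximum inventory level, $\mu^c_i$ its maximum supply rate, $\theta^c_i$ its average deterioration percentage per unit time, and $\lambda^c$ is the demand rate at the lowest echelon $m$. When $m=2$ there are no middle equations and no middle conditions. *)

(* Defs.v *)
From HB Require Import structures.
From mathcomp Require Import all_boot all_order all_algebra.
From mathcomp Require Import all_classical all_reals all_analysis.
From mathcomp Require Import complex.
Set Implicit Arguments. Unset Strict Implicit. Unset Printing Implicit Defensive.
Import Order.TTheory GRing.Theory Num.Theory.
Local Open Scope ring_scope.

(* State vector x = (x_1, ..., x_m) is a row vector x : 'rV[R]_m;
   x_k (1-based, 1 <= k <= m) is stored at column k-1.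
   Out of range indices give 0 (never used in the system). *)
Definition xcomp {R : realType} {m : nat} (x : 'rV[R]_m) (k : nat) : R :=
  match k with
  | 0 => 0
  | k'.+1 => if insub k' is Some j then x ord0 j else 0
  end.

(* Right-hand side of the i-th equation (1 <= i <= m), parameters
   C mu theta indexed 1..m (C i = C_i, mu i = mu^c_i, theta i = theta^c_i),
   lam = lambda^c. *)
Definition rhs {R : realType} (m : nat) (C mu theta : nat -> R) (lam : R)
    (i : nat) (x : 'rV[R]_m) : R :=
  if i == 1%N then
    mu 1%N * ((C 1%N - xcomp x 1) / C 1%N) - theta 1%N * xcomp x 1
    - mu 2%N * (xcomp x 1 / C 1%N) * ((C 2%N - xcomp x 2) / C 2%N)
  else if i == m then
    mu m * (xcomp x m.-1 / C m.-1) * ((C m - xcomp x m) / C m)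
    - theta m * xcomp x m - lam
  else
    mu i * (xcomp x i.-1 / C i.-1) * ((C i - xcomp x i) / C i)
    - theta i * xcomp x i
    - mu i.+1 * (xcomp x i / C i) * ((C i.+1 - xcomp x i.+1) / C i.+1).

Definition jacobian {R : realType} (m : nat) (C mu theta : nat -> R) (lam : R)
    (xs : 'rV[R]_m) : 'M[R]_m :=
  \matrix_(i < m, j < m)
     'D_(delta_mx ord0 j : 'rV[R]_m) (rhs C mu theta lam i.+1) xs.

Definition is_equilibrium {R : realType} (m : nat) (C mu theta : nat -> R)
    (lam : R) (xs : 'rV[R]_m) : Prop :=
  forall i : nat, (1 <= i <= m)%N -> rhs C mu theta lam i xs = 0.

Definition stable_equilibrium {R : realType} (m : nat) (C mu theta : nat -> R)
    (lam : R) (xs : 'rV[R]_m) : Prop :=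
  forall z : R[i],
    eigenvalue (map_mx (real_complex R) (jacobian C mu theta lam xs)) z ->
    complex.Re z < 0.

(* Main.v *)
Set Warnings "-all".
From Pilot Require Import Defs.
From HB Require Import structures.
From mathcomp Require Import all_boot all_order all_algebra.
From mathcomp Require Import all_classical all_reals all_analysis.
From mathcomp Require Import complex.
From mathcomp Require Import ring lra zify.
Import Order.TTheory GRing.Theory Num.Theory.
Import numFieldNormedType.Exports.
Local Open Scope complex_scope.
Local Open Scope ring_scope.

Section G.
Variable R : realType.

Lemma norm_realC (x : R[i]) : `|x| = (complex.Re `|x|)%:C.
Proof.
by rewrite {1}[`|x|]complexE ger0_Im ?normr_ge0 // mulr0 addr0.
Qed.

Lemma normC_real (x : R) : `|x%:C| = (`|x|)%:C :> R[i].
Proof.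
rewrite normc_def /=. congr (_%:C).
by rewrite expr0n /= addr0 sqrtr_sqr.
Qed.

Lemma Re_le_norm (w : R[i]) : complex.Re w <= complex.Re `|w|.
Proof.
rewrite normc_def /=.
apply: le_trans (ler_norm _) _.
rewrite -sqrtr_sqr ler_sqrt ?lerDl ?sqr_ge0 //.
by rewrite addr_ge0 ?sqr_ge0.
Qed.

Lemma gersh (m : nat) (A : 'M[R]_m) :
  (forall j : 'I_m, A j j + \sum_(i < m | i != j) `|A i j| < 0) ->
  forall z : R[i], eigenvalue (map_mx (real_complex R) A) z -> complex.Re z < 0.
Proof.
move=> hA z /eigenvalueP [v hv v0].
case: (pickP (fun j => v ord0 j != 0)) => [j0 hj0|h]; last first.
  by case/eqP: v0; apply/rowP => j; rewrite !mxE; move: (h j) => /negbFE/eqP.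
pose nv j := complex.Re `|v ord0 j|.
case: (@arg_maxP _ _ _ j0 predT nv) => // j _ jmax.
have vle : forall i, `|v ord0 i| <= `|v ord0 j|.
  by move=> i; rewrite [`|v ord0 i|]norm_realC [`|v ord0 j|]norm_realC lecR; exact: jmax.
have vjpos : 0 < `|v ord0 j|.
  apply: lt_le_trans (vle j0); by rewrite normr_gt0.
have := congr1 (fun M : 'rV[R[i]]_m => M ord0 j) hv; rewrite !mxE => eq.
rewrite (bigD1 j) //= !mxE in eq.
have eq2 : (z - (A j j)%:C) * v ord0 j =
    \sum_(i < m | i != j) v ord0 i * (A i j)%:C.
  rewrite mulrBl -eq; under eq_bigr do rewrite mxE. ring.
set S := \sum_(i < m | i != j) `|A i j|.
have hn : `|z - (A j j)%:C| * `|v ord0 j| <= `|v ord0 j| * S%:C.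
  rewrite -normrM eq2.
  apply: le_trans (ler_norm_sum _ _ _) _.
  rewrite /S rmorph_sum mulr_sumr; apply: ler_sum => i _.
  rewrite normrM normC_real; apply: ler_pM; rewrite ?normr_ge0 ?ler0c ?normr_ge0 //.
have hn2 : `|z - (A j j)%:C| <= S%:C.
  by rewrite -(ler_pM2r vjpos) [X in _ <= X]mulrC.
move: hn2; rewrite norm_realC lecR => hn2.
have := Re_le_norm (z - (A j j)%:C).
have e : complex.Re (z - (A j j)%:C) = complex.Re z - A j j by clear -z; case: z.
rewrite e => h1.
have := hA j; rewrite -/S => h2.
lra.
Qed.
End G.
Section D.
Variable R : realType.
Variable m : nat.
Implicit Types (a v : 'rV[R]_m).

Lemma is_derive_aff (f : 'rV[R]_m -> R) a v (L : R) :
  (forall (h : R) y, f (h *: v + y) = h * L + f y) -> is_derive a v f L.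
Proof.
move=> hf.
have key : \forall h \near dnbhs (0:R), h^-1 *: ((f \o shift a) (h *: v) - f a) = L.
  near=> h.
  have hN0 : h != 0 by near: h; exact: nbhs_dnbhs_neq.
  rewrite /= hf addrK /GRing.scale /= mulrA mulVf // mul1r //.
split.
  exact: (is_cvg_near_cst L key).
rewrite /derive; apply: lim_near_cst; [exact: norm_hausdorff | exact: key].
Unshelve. all: by end_near.
Qed.

Lemma xcompL (h : R) a v k : xcomp (h *: v + a) k = h * xcomp v k + xcomp a k.
Proof.
case: k => [|k] /=; first by rewrite mulr0 addr0.
by case: insub => [j|]; rewrite ?mxE ?mulr0 ?addr0.
Qed.

Lemma dX a v k : is_derive a v (fun x => xcomp x k) (xcomp v k).
Proof. by apply: is_derive_aff => h y; rewrite xcompL. Qed.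

Lemma dC a v (c : R) : is_derive a v (fun _ => c) 0.
Proof. exact: is_derive_cst. Qed.

Lemma dD a v (f g : 'rV[R]_m -> R) df dg :
  is_derive a v f df -> is_derive a v g dg ->
  is_derive a v (fun x => f x + g x) (df + dg).
Proof. move=> H1 H2; exact: is_deriveD. Qed.

Lemma dN a v (f : 'rV[R]_m -> R) df :
  is_derive a v f df -> is_derive a v (fun x => - f x) (- df).
Proof. move=> H1; exact: is_deriveN. Qed.

Lemma dM a v (f g : 'rV[R]_m -> R) df dg :
  is_derive a v f df -> is_derive a v g dg ->
  is_derive a v (fun x => f x * g x) (f a * dg + g a * df).
Proof. move=> H1 H2; exact: is_deriveM. Qed.


Lemma der_eq (f : 'rV[R]_m -> R) a v d : is_derive a v f d -> 'D_v f a = d.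
Proof. by move=> H; rewrite derive_val. Qed.

Ltac dtac := repeat (first [apply: dX | apply: dC | apply: dD | apply: dN | apply: dM]).

Definition Erhs (C mu theta : nat -> R) (r : nat) a v : R :=
  if r == 1%N then
    - mu 1%N * (xcomp v 1 / C 1%N) - theta 1%N * xcomp v 1
    - mu 2%N * (xcomp v 1 / C 1%N * ((C 2%N - xcomp a 2) / C 2%N)
                - xcomp a 1 / C 1%N * (xcomp v 2 / C 2%N))
  else if r == m then
    mu m * (xcomp v m.-1 / C m.-1 * ((C m - xcomp a m) / C m)
            - xcomp a m.-1 / C m.-1 * (xcomp v m / C m))
    - theta m * xcomp v m
  else
    mu r * (xcomp v r.-1 / C r.-1 * ((C r - xcomp a r) / C r)
            - xcomp a r.-1 / C r.-1 * (xcomp v r / C r))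
    - theta r * xcomp v r
    - mu r.+1 * (xcomp v r / C r * ((C r.+1 - xcomp a r.+1) / C r.+1)
            - xcomp a r / C r * (xcomp v r.+1 / C r.+1)).

Lemma Drhs C mu theta lam r a v :
  'D_v (rhs C mu theta lam r) a = Erhs C mu theta r a v.
Proof.
rewrite /rhs /Erhs; case: (r == 1%N); [|case: (r == m)];
  apply: der_eq; (eapply is_derive_eq; [dtac|]); rewrite /=; ring.
Qed.

End D.
Section E.
Variable R : realType.

Lemma xcomp_delta m (j : 'I_m) k :
  xcomp (delta_mx ord0 j : 'rV[R]_m) k = (k == j.+1)%:R.
Proof.
case: k => [|k] //=.
case: insubP => [i _ <-|hk]; first by rewrite mxE eqxx /= eqSS.
have -> : (k.+1 == j.+1) = false.
  by rewrite eqSS; apply/negP => /eqP ek; move: hk; rewrite ek ltn_ord.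
by [].
Qed.

Lemma sum2 (g : nat -> R) a b : a != b ->
  (forall n, n != a -> n != b -> g n = 0) ->
  forall n, \sum_(i < n) `|g i| =
    (if (a < n)%N then `|g a| else 0) + (if (b < n)%N then `|g b| else 0).
Proof.
move=> ab hg; elim=> [|n IH]; first by rewrite big_ord0 !ltn0 addr0.
rewrite big_ord_recr IH !ltnS (leq_eqVlt a) (leq_eqVlt b).
case: (eqVneq a n) => [ea|ha]; case: (eqVneq b n) => [eb|hb].
- by move: ab; rewrite ea eb eqxx.
- by rewrite ea ltnn /= add0r addrC.
- by rewrite eb ltnn /= addr0 addrC.
- rewrite /= (hg n); [by rewrite normr0 addr0 | by rewrite eq_sym | by rewrite eq_sym].
Qed.

Lemma indF (k l : nat) : k != l -> (k == l)%:R = 0 :> R.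
Proof. by move=> /negbTE ->. Qed.
Lemma indT (k : nat) : (k == k)%:R = 1 :> R.
Proof. by rewrite eqxx. Qed.
End E.

Arguments Erhs {R m}.

Lemma nF : forall a b : nat, a <> b -> (a == b) = false.
Proof. by move=> a b /eqP/negbTE. Qed.
Ltac kill := rewrite ?eqxx; repeat match goal with |- context [(?a == ?b)%N] => rewrite (nF a b); [|lia] end; rewrite /=.
Ltac fin := rewrite ?normr0 ?if_same; repeat (rewrite ger0_norm; last by lra); lra.

Theorem proposition6 (R : realType) (m : nat) (C mu theta : nat -> R) (lam : R)
    (xs : 'rV[R]_m) :
  (2 <= m)%N ->
  (forall i : nat, (1 <= i <= m)%N -> 0 < C i) ->
  (forall i : nat, (1 <= i <= m)%N -> 0 <= mu i) ->
  (forall i : nat, (1 <= i <= m)%N -> 0 <= theta i) ->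
  0 <= lam ->
  is_equilibrium C mu theta lam xs ->
  (forall i : nat, (1 <= i <= m)%N -> 0 <= xcomp xs i <= C i) ->
  mu 2%N / C 1%N < mu 1%N / C 1%N + theta 1%N ->
  (forall i : nat, (2 <= i <= m.-1)%N ->
     mu i / C i.-1 + mu i.+1 / C i.+1 < theta i) ->
  mu m / C m.-1 < theta m ->
  stable_equilibrium C mu theta lam xs.
Proof.
move=> hm2 hC hmu hth hlam _ hx h1 hmid hlast.
have eJ : forall (i k : 'I_m), Pilot.Defs.jacobian C mu theta lam xs i k
    = Erhs C mu theta i.+1 xs (delta_mx ord0 k).
  by move=> i k; rewrite mxE Drhs.
apply: gersh => j.
rewrite eJ; under eq_bigr do rewrite eJ.
pose g n := if n == (j:nat) then 0
  else Erhs C mu theta n.+1 xs (delta_mx ord0 j : 'rV[R]_m).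
have -> : \sum_(i < m | i != j) `|Erhs C mu theta i.+1 xs (delta_mx ord0 j)|
    = \sum_(i < m) `|g i|.
  rewrite big_mkcond; apply: eq_bigr => i _; rewrite /g.
  have -> : (i != j) = ((i:nat) != j) by [].
  by case: eqP => _ //=; rewrite normr0.
have hj := ltn_ord j.
have abn : j.-1 != j.+1 by apply/eqP; lia.
have hg : forall n, n != j.-1 -> n != j.+1 -> g n = 0.
  move=> n hn1 hn2; rewrite /g; case: eqP => // hn.
  rewrite /Erhs !xcomp_delta.
  case: (@eqP _ n.+1 1%N) => e1; [|case: (@eqP _ n.+1 m) => e2];
    rewrite !indF; try ring; apply/eqP; lia.
rewrite (@sum2 R g _ _ abn hg m) /g; clear hg.
have hP : forall k, (1 <= k)%N -> (k < m)%N ->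
    0 <= mu k.+1 * (xcomp xs k / C k) / C k.+1.
  move=> k k1 km; have /andP[x0 _] : 0 <= xcomp xs k <= C k by apply: hx; lia.
  apply: divr_ge0; last (apply: ltW; apply: hC; lia).
  apply: mulr_ge0; first (apply: hmu; lia).
  by apply: divr_ge0 => //; apply: ltW; apply: hC; lia.
have hQ : forall k, (1 <= k)%N -> (k < m)%N ->
    0 <= mu k.+1 * ((C k.+1 - xcomp xs k.+1) / C k.+1) / C k.
  move=> k k1 km; have /andP[_ x1] : 0 <= xcomp xs k.+1 <= C k.+1 by apply: hx; lia.
  apply: divr_ge0; last (apply: ltW; apply: hC; lia).
  apply: mulr_ge0; first (apply: hmu; lia).
  apply: divr_ge0; first by rewrite subr_ge0.
  apply: ltW; apply: hC; lia.
have hMC : forall k l, (1 <= k <= m)%N -> (1 <= l <= m)%N -> 0 <= mu k / C l.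
  move=> k l hk hl; apply: divr_ge0; first exact: hmu.
  exact/ltW/hC.
rewrite /Erhs !xcomp_delta.
move: hP hQ; move: (xcomp xs) => X hP hQ.
clear eJ hx g abn.
move: (nat_of_ord j) hj => {j} j hj.
have nF : forall a b : nat, a <> b -> (a == b) = false.
  by move=> a b /eqP/negbTE.
case: j hj => [|j] hj.
  rewrite /= hm2.
  have q := hQ 1%N (leqnn 1) hm2.
  have q2 : 0 <= mu 2%N / C 1%N by apply: hMC; lia.
  case: (eqVneq 2%N m) => e2.
    subst m; rewrite /=.
    fin.
  rewrite /=.
  fin.
rewrite /= (nF j j.+1); last lia.
rewrite (nF j.+2 j.+1); last lia.
rewrite (_ : (j < m)%N = true); last lia.
have p := hP j.+1 isT hj.
case: (eqVneq j.+2 m) => hm.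
  subst m; rewrite ltnn /= eqxx.
  have t : 0 < theta j.+2.
    apply: le_lt_trans hlast; apply: hMC; lia.
  destruct j as [|j].
    rewrite /=.
    kill; fin.
  rewrite /= ?eqxx.
  kill; fin.
have hlt : (j.+2 < m)%N by rewrite ltn_neqAle hm hj.
rewrite hlt.
have q := hQ j.+2 isT hlt.
have t : 0 < theta j.+2.
  have hm1 : mu j.+2 / C j.+1 + mu j.+3 / C j.+3 < theta j.+2.
    by apply: (hmid j.+2); lia.
  have a1 : 0 <= mu j.+2 / C j.+1 by apply: hMC; lia.
  have a2 : 0 <= mu j.+3 / C j.+3 by apply: hMC; lia.
  lra.
case: (eqVneq j.+3 m) => hm3.
  subst m; rewrite /=.
  destruct j as [|j]; kill; fin.
rewrite /=.
destruct j as [|j]; kill; fin.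
Qed.
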